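(* Let $(\mathcal G,p)$ be a $1$-closed CPS on the finite set $\Omega$ with $\mathcal G$ closed under unions and nonempty intersections and covering $\Omega$. For every event $E$ and state $\omega$: if $\omega\in E$ and $p_{m(\omega)}(E)=1$, then $m(\omega)\subseteq E$.
   Context: $\Omega$ is a finite set; every subset is an event. A CPS is a pair $(\mathcal G,p)$ where $\mathcal G$ is a family of nonempty subsets of $\Omega$ and $p$ assigns to each $G\in\mathcal G$ a probability measure $p_G$ on $\Omega$ with $p_G(G)=1$ and $p_G(E)=p_G(F)p_F(E)$ whenever $E\subseteq F\subseteq G$, $F,G\in\mathcal G$. Atom: $m(\omega)=\bigcap\{G\in\mathcal G:\omega\in G\}$. $(\mathcal G,p)$ is $1$-closed if every $L\subseteq G$ with $G\in\mathcal G$ and $p_G(L)=1$ belongs to $\mathcal G$. *)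

(* Defs.v *)
From mathcomp Require Import all_boot all_order all_algebra.
From mathcomp Require Import reals.
Set Implicit Arguments. Unset Strict Implicit. Unset Printing Implicit Defensive.
Import Order.TTheory GRing.Theory Num.Theory.
Local Open Scope ring_scope.

Section CPS.
Variables (R : realType) (Omega : finType).

Definition is_prob (mu : Omega -> R) : Prop :=
  (forall w, 0 <= mu w) /\ \sum_(w : Omega) mu w = 1.

Definition Pr (mu : Omega -> R) (E : {set Omega}) : R := \sum_(w in E) mu w.

Definition is_CPS (G : {set {set Omega}}) (p : {set Omega} -> Omega -> R) : Prop :=
  [/\ (forall A, A \in G -> A != set0),
      (forall A, A \in G -> is_prob (p A) /\ Pr (p A) A = 1) &
      (forall E F H : {set Omega}, E \subset F -> F \subset H -> F \in G -> H \in G ->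
         Pr (p H) E = Pr (p H) F * Pr (p F) E)].

Definition atom (G : {set {set Omega}}) (w : Omega) : {set Omega} :=
  \bigcap_(A in G | w \in A) A.

Definition one_closed (G : {set {set Omega}}) (p : {set Omega} -> Omega -> R) : Prop :=
  forall A L : {set Omega}, A \in G -> L \subset A -> Pr (p A) L = 1 -> L \in G.

Definition union_closed (G : {set {set Omega}}) : Prop :=
  forall A B, A \in G -> B \in G -> A :|: B \in G.

Definition nonempty_inter_closed (G : {set {set Omega}}) : Prop :=
  forall A B, A \in G -> B \in G -> A :&: B != set0 -> A :&: B \in G.

Definition covers (G : {set {set Omega}}) : Prop :=
  forall w : Omega, exists2 A, A \in G & w \in A.

End CPS.

(* Main.v *)
Require Import Defs.
From mathcomp Require Import all_boot all_order all_algebra.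
From mathcomp Require Import reals.
Import Order.TTheory GRing.Theory Num.Theory.
Local Open Scope ring_scope.

Theorem lemma1 (R : realType) (Omega : finType)
  (G : {set {set Omega}}) (p : {set Omega} -> Omega -> R) :
  is_CPS G p -> one_closed G p -> union_closed G ->
  nonempty_inter_closed G -> covers G ->
  forall (E : {set Omega}) (w : Omega),
    w \in E -> Pr (p (atom G w)) E = 1 -> atom G w \subset E.
Proof.
move=> [Hne Hpr Hmul] H1 _ Hint Hcov E w wE PE.
have [A0 A0G wA0] := Hcov w.
have P: (A0 :&: atom G w \in G) && (w \in atom G w).
  rewrite /atom; apply: (big_ind (fun X => (A0 :&: X \in G) && (w \in X))).
  - by rewrite setIT A0G inE.
  - move=> X Y /andP[XG wX] /andP[YG wY].
    rewrite [w \in X :&: Y]inE wX wY andbT.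
    have -> : A0 :&: (X :&: Y) = (A0 :&: X) :&: (A0 :&: Y).
      by rewrite setIACA setIid.
    rewrite andbT; apply: Hint => //; apply/set0Pn; exists w; by rewrite !inE wA0 wX wY.
  - move=> A /andP[AG wA]; rewrite wA andbT; apply: Hint => //.
    by apply/set0Pn; exists w; rewrite inE wA0 wA.
move/andP: P => [MG wM].
have sub: atom G w \subset A0 by rewrite /atom; apply: bigcap_inf; rewrite A0G.
have MG' : atom G w \in G by move: MG; rewrite (setIidPr sub).
set M := atom G w in MG' wM sub PE *.
have [[pos sum1] PM] := Hpr _ MG'.
have out0 : \sum_(x in ~: M) p M x = 0.
  have : \sum_(x in M) p M x + \sum_(x in ~: M) p M x = 1.
    rewrite -sum1 [RHS](bigID (fun x => x \in M)) /=.
    by congr (_ + _); apply: eq_bigl => x; rewrite ?inE ?andbT.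
  by rewrite -[Pr _ _]/(\sum_(x in M) p M x) in PM; rewrite PM => h; apply: (addrI 1); rewrite addr0.
have pos0 : forall x, x \in ~: M -> p M x = 0.
  move=> x xM; apply/eqP; rewrite eq_le pos andbT -out0.
  by rewrite (bigD1 x) //= lerDl sumr_ge0.
have PEM : Pr (p M) (E :&: M) = 1.
  rewrite -PE /Pr [in RHS](bigID (fun x => x \in M)) /=.
  rewrite [X in _ = _ + X]big1 ?addr0.
    by apply: eq_bigl => x; rewrite inE.
  by move=> x /andP[_ xM]; apply: pos0; rewrite inE.
have EMG := H1 _ _ MG' (subsetIr _ _) PEM.
apply: (subset_trans _ (subsetIl E M)).
rewrite /M /atom; apply: bigcap_inf; by rewrite EMG inE wE wM.
Qed.
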